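(* Let $\dot x = f(x,u) = g(x)+h(x)u$ and assume there exists a Lyapunov function $V$ such that under the policy $\mu(x)$ the state is asymptotically stable, i.e. $\dot V(x)<0$ for all $x\in\mathcal{B} = \{x\in\mathbb{R}^n : \Vert x\Vert < r\}$, $r>0$. Consider the trajectory $x(t)$ starting at $x(0)$ that applies $\mu(x(t))$ except on $[\tau,\tau+\lambda]$, where it applies $\mu_\star(t) = -R^{-1}h(x(t))^\top\rho(t) + \mu(x(t))$, and let $t\ge\tau+\lambda$. Then $$V(x(t)) - V(x(t),\mu(x(t))) \le \lambda\beta,$$ where $V(x(t),\mu(x(t))) := V(x(0)) + \int_0^t \frac{\partial V}{\partial x}(x(s))\, f(x(s),\mu(x(s)))\,ds$ and $$\beta = \sup_{t\in[\tau,\tau+\lambda]} -\frac{\partial V}{\partial x}(x(t))\,h(x(t))R^{-1}h(x(t))^\top\rho(t).$$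
   Context: $x\in\mathbb{R}^n$, $u\in\mathbb{R}^m$, $g:\mathbb{R}^n\to\mathbb{R}^n$, $h:\mathbb{R}^n\to\mathbb{R}^{n\times m}$, $\mu:\mathbb{R}^n\to\mathbb{R}^m$ an equilibrium policy, $R\in\mathbb{R}^{m\times m}$ positive definite, $\tau$ a switching time and $\lambda\ge 0$ a switching duration. $\rho$ is the adjoint solving $\dot\rho = -\left(\frac{\partial \ell}{\partial x} + \frac{\partial \mu}{\partial x}^\top\frac{\partial \ell}{\partial u} - \frac{\eta}{T_r}\sum_{i=1}^N \frac{p(s_i)}{q(s_i)}\left(\frac{\partial \gamma_i}{\partial x} + \frac{\partial \mu}{\partial x}^\top \frac{\partial \gamma_i}{\partial u}\right)\right) - \left(\frac{\partial f}{\partial x} + \frac{\partial f}{\partial u}\frac{\partial \mu}{\partial x}\right)^\top \rho$ with $\rho(t_i+T)=\frac{\partial m}{\partial x}(x(t_i+T))$ along the nominal trajectory under $\mu$ on a horizon $[t_i,t_i+T]$, where $\ell$ is a running cost, $m$ a terminal cost, $s_1,\dots,s_N$ uniform samples from a search domain $\mathcal{X}^v\subset\mathbb{R}^{n+m}$, $p$ a target density, $q(s)=\frac{\eta}{T_r}\int_{t_i-t_r}^{t_i+T}\exp[-\tfrac12(s-x_v(t))^\top\Sigma^{-1}(s-x_v(t))]dt$ with $x_v$ the part of the state–action pair in $\mathcal{X}^v$, $\Sigma$ positive definite, $\eta$ normalizing, $T_r=T+t_r$, and $\gamma_i=\exp[-\tfrac12(s_i-x_v)^\top\Sigma^{-1}(s_i-x_v)]$.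 *)

(* Defs.v *)
From HB Require Import structures.
From mathcomp Require Import all_boot all_order all_algebra.
From mathcomp Require Import all_classical all_reals all_analysis.
Set Implicit Arguments. Unset Strict Implicit. Unset Printing Implicit Defensive.
Import Order.TTheory GRing.Theory Num.Theory.
Import numFieldNormedType.Exports.
Local Open Scope classical_set_scope.
Local Open Scope ring_scope.

Definition enorm (R : realType) (n : nat) (x : 'cV[R]_n) : R :=
  Num.sqrt (\sum_(i < n) x i ord0 ^+ 2).

Definition posdef (R : realType) (m : nat) (A : 'M[R]_m) : Prop :=
  A^T = A /\ forall v : 'cV[R]_m, v != 0 -> 0 < (v^T *m A *m v) ord0 ord0.

Definition dyn (R : realType) (n m : nat) (g : 'cV[R]_n -> 'cV[R]_n)
  (h : 'cV[R]_n -> 'M[R]_(n, m)) (x : 'cV[R]_n) (u : 'cV[R]_m) : 'cV[R]_n :=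
  g x + h x *m u.

Definition mu_star (R : realType) (n m : nat) (h : 'cV[R]_n -> 'M[R]_(n, m))
  (Rm : 'M[R]_m) (mu : 'cV[R]_n -> 'cV[R]_m) (rho : R -> 'cV[R]_n)
  (x : 'cV[R]_n) (t : R) : 'cV[R]_m :=
  - (invmx Rm *m (h x)^T *m rho t) + mu x.

Definition switched_control (R : realType) (n m : nat) (h : 'cV[R]_n -> 'M[R]_(n, m))
  (Rm : 'M[R]_m) (mu : 'cV[R]_n -> 'cV[R]_m) (rho : R -> 'cV[R]_n)
  (tau lam : R) (x : R -> 'cV[R]_n) (t : R) : 'cV[R]_m :=
  if (tau <= t) && (t <= tau + lam) then mu_star h Rm mu rho (x t) t else mu (x t).

Definition V_nominal (R : realType) (n m : nat) (V : 'cV[R]_n -> R)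
  (dV : 'cV[R]_n -> 'rV[R]_n) (g : 'cV[R]_n -> 'cV[R]_n)
  (h : 'cV[R]_n -> 'M[R]_(n, m)) (mu : 'cV[R]_n -> 'cV[R]_m)
  (x : R -> 'cV[R]_n) (t : R) : R :=
  V (x 0) + Rintegral lebesgue_measure `[0, t]
     (fun s => (dV (x s) *m dyn g h (x s) (mu (x s))) ord0 ord0).

Definition beta (R : realType) (n m : nat) (dV : 'cV[R]_n -> 'rV[R]_n)
  (h : 'cV[R]_n -> 'M[R]_(n, m)) (Rm : 'M[R]_m) (rho : R -> 'cV[R]_n)
  (x : R -> 'cV[R]_n) (tau lam : R) : R :=
  sup [set - (dV (x s) *m h (x s) *m invmx Rm *m (h (x s))^T *m rho s) ord0 ord0
       | s in `[tau, tau + lam]].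

(* Main.v *)
Require Import Defs.
From HB Require Import structures.
From mathcomp Require Import all_boot all_order all_algebra.
From mathcomp Require Import all_classical all_reals all_analysis.
Import Order.TTheory GRing.Theory Num.Theory.
Import numFieldNormedType.Exports.
Local Open Scope classical_set_scope.
Local Open Scope ring_scope.
Section S.
Context {R : realType}.

Lemma mx_cvg_entries {T} (F : set_system T) {FF : Filter F} a b
  (G : T -> 'M[R]_(a,b)) (M : 'M[R]_(a,b)) :
  (forall i j, (fun y => G y i j) @ F --> M i j) -> G @ F --> M.
Proof.
move=> H; apply/cvg_mx_entourageP => A entA.
apply: filter_forall => i; apply: filter_forall => j.
have := H i j; move=> /cvg_entourageP /(_ A entA) HA.
by apply: (@filterS _ F _ _ _ _ HA) => y /= ?; rewrite inE.
Qed.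

Lemma cvg_mulmx {T} (F : set_system T) {FF : Filter F} a b c
  (A : T -> 'M[R]_(a,b)) (B : T -> 'M[R]_(b,c)) (A0 : 'M[R]_(a,b)) (B0 : 'M[R]_(b,c)) :
  A @ F --> A0 -> B @ F --> B0 -> (fun y => A y *m B y) @ F --> A0 *m B0.
Proof.
move=> HA HB; apply: mx_cvg_entries => i j.
rewrite mxE; under eq_cvg do rewrite mxE.
apply: cvg_big => //; first exact: add_continuous.
move=> k _; apply: cvgM.
  exact: (cvg_comp _ _ HA (@coord_continuous _ _ _ i k A0)).
exact: (cvg_comp _ _ HB (@coord_continuous _ _ _ k j B0)).
Qed.

Lemma cvg_trmx {T} (F : set_system T) {FF : Filter F} a b
  (A : T -> 'M[R]_(a,b)) (A0 : 'M[R]_(a,b)) :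
  A @ F --> A0 -> (fun y => (A y)^T) @ F --> A0^T.
Proof.
move=> HA; apply: mx_cvg_entries => i j.
rewrite mxE; under eq_cvg do rewrite mxE.
exact: (cvg_comp _ _ HA (@coord_continuous _ _ _ j i A0)).
Qed.


Notation mu := (@lebesgue_measure R).

Lemma ftc_piece (F G : R -> R) a b : a <= b ->
  {within `[a,b], continuous G} -> {within `[a,b], continuous F} ->
  {in `]a,b[, forall s, derivable F s 1 /\ derive1 F s = G s} ->
  Rintegral mu `[a,b] G = F b - F a.
Proof.
rewrite le_eqVlt => /predU1P[<- _ _ _|ab cG cF dF].
  by rewrite set_itv1 Rintegral_set1 subrr.
have [_ Fa Fb] := (continuous_within_itvP F ab).1 cF.
rewrite /Rintegral (@continuous_FTC2 _ G F a b ab cG) //.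
  split => // s /dF [] //.
by move=> s /dF [].
Qed.

Lemma Rint_split (G : R -> R) a c b : a <= c -> c <= b ->
  {within `[a,b], continuous G} ->
  Rintegral mu `[a,b] G = Rintegral mu `[a,c] G + Rintegral mu `[c,b] G.
Proof.
move=> ac cb cG.
have iG : mu.-integrable `[a,b] (EFin \o G).
  by apply: continuous_compact_integrable => //; exact: segment_compact.
have := @Rintegral_itvB R G (BLeft a) (BRight b) c iG.
rewrite !bnd_simp => /(_ ac cb) E.
rewrite -(@Rintegral_itv_obnd_cbnd R c (BRight b)); last first.
  apply: integrableS iG => //; apply: subset_itvr; rewrite bnd_simp //.
by rewrite -E addrC subrK.
Qed.


Lemma chain {n : nat} (V : 'cV[R]_n -> R) (dV : 'cV[R]_n -> 'rV[R]_n)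
  (x : R -> 'cV[R]_n) (s : R) (dx : 'cV[R]_n) :
  (forall z, differentiable V z) ->
  (forall z v, 'D_v V z = (dV z *m v) ord0 ord0) ->
  is_derive s 1 x dx ->
  derivable (V \o x) s 1 /\ derive1 (V \o x) s = (dV (x s) *m dx) ord0 ord0.
Proof.
move=> dVd DV [dxs Dx].
have dx' : differentiable x s by apply/derivable1_diffP.
have dc : differentiable (V \o x) s := differentiable_comp dx' (dVd (x s)).
split; first by apply/derivable1_diffP.
rewrite derive1E deriveE // diff_comp //= -(deriveE _ dx') Dx -deriveE //.
Qed.


Lemma cvg_entry {T} (F : set_system T) {FF : Filter F} a b
  (A : T -> 'M[R]_(a,b)) (A0 : 'M[R]_(a,b)) i j :
  A @ F --> A0 -> (fun y => A y i j) @ F --> A0 i j.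
Proof. by move=> HA; exact: (cvg_comp _ _ HA (@coord_continuous _ _ _ i j A0)). Qed.

Lemma cont_G0 {n m : nat} (g : 'cV[R]_n -> 'cV[R]_n) (h : 'cV[R]_n -> 'M[R]_(n, m))
  (mu : 'cV[R]_n -> 'cV[R]_m) (dV : 'cV[R]_n -> 'rV[R]_n) (x : R -> 'cV[R]_n) :
  continuous g -> continuous h -> continuous mu -> continuous dV ->
  {within [set s : R | 0 <= s], continuous x} ->
  {within [set s : R | 0 <= s], continuous
     (fun s => (dV (x s) *m dyn g h (x s) (mu (x s))) ord0 ord0)}.
Proof.
move=> cg ch cmu cdV /subspace_continuousP cx; apply/subspace_continuousP => s0 s0p.
have Hx := cx s0 s0p.
have Hc (W : topologicalType) (k : 'cV[R]_n -> W) : continuous k ->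
    (fun s => k (x s)) @ within [set s : R | 0 <= s] (nbhs s0) --> k (x s0).
  by move=> c; exact: (cvg_comp _ _ Hx (c (x s0))).
apply: cvg_entry.
apply: cvg_mulmx; first exact: Hc.
rewrite /dyn; apply: cvgD; first exact: Hc.
apply: cvg_mulmx; first exact: Hc.
exact: (Hc _ (mu : 'cV[R]_n -> 'cV[R]_m)).
Qed.

Lemma cont_D {n m : nat} (h : 'cV[R]_n -> 'M[R]_(n, m)) (Rm : 'M[R]_m)
  (rho : R -> 'cV[R]_n) (dV : 'cV[R]_n -> 'rV[R]_n) (x : R -> 'cV[R]_n) :
  continuous h -> continuous rho -> continuous dV ->
  {within [set s : R | 0 <= s], continuous x} ->
  {within [set s : R | 0 <= s], continuous
     (fun s => - (dV (x s) *m h (x s) *m invmx Rm *m (h (x s))^T *m rho s) ord0 ord0)}.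
Proof.
move=> ch crho cdV /subspace_continuousP cx; apply/subspace_continuousP => s0 s0p.
have Hx := cx s0 s0p.
have Hc (W : topologicalType) (k : 'cV[R]_n -> W) : continuous k ->
    (fun s => k (x s)) @ within [set s : R | 0 <= s] (nbhs s0) --> k (x s0).
  by move=> c; exact: (cvg_comp _ _ Hx (c (x s0))).
apply: cvgN.
apply: cvg_entry.
apply: cvg_mulmx; last exact: cvg_within_filter (crho s0).
apply: cvg_mulmx; last by apply: cvg_trmx; exact: Hc.
apply: cvg_mulmx; last exact: cvg_cst.
apply: cvg_mulmx; exact: Hc.
Qed.

End S.

From mathcomp Require Import ring lra.

Theorem theorem1 (R : realType) (n m : nat)
  (g : 'cV[R]_n -> 'cV[R]_n) (h : 'cV[R]_n -> 'M[R]_(n, m))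
  (mu : 'cV[R]_n -> 'cV[R]_m) (Rm : 'M[R]_m)
  (V : 'cV[R]_n -> R) (dV : 'cV[R]_n -> 'rV[R]_n) (r : R)
  (rho : R -> 'cV[R]_n) (x : R -> 'cV[R]_n) (tau lam t : R) :
  (* standing regularity *)
  continuous g -> continuous h -> continuous mu -> continuous rho ->
  posdef Rm ->
  (* V is a C^1 Lyapunov function with gradient dV *)
  (forall z : 'cV[R]_n, differentiable V z) ->
  (forall z v : 'cV[R]_n, 'D_v V z = (dV z *m v) ord0 ord0) ->
  continuous dV ->
  V 0 = 0 -> (forall z : 'cV[R]_n, z != 0 -> 0 < V z) ->
  0 < r ->
  (forall z : 'cV[R]_n, z != 0 -> enorm z < r ->
     (dV z *m dyn g h z (mu z)) ord0 ord0 < 0) ->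
  (* switching time and duration *)
  0 <= tau -> 0 <= lam ->
  (* x is the trajectory from x(0) applying mu except on [tau, tau+lam] *)
  {within [set s | 0 <= s], continuous x} ->
  (forall s, 0 < s -> s != tau -> s != tau + lam ->
     is_derive s 1 x (dyn g h (x s) (switched_control h Rm mu rho tau lam x s))) ->
  tau + lam <= t ->
  V (x t) - V_nominal V dV g h mu x t <= lam * beta dV h Rm rho x tau lam.
Proof.
move=> cg ch cmu crho _ dVd DV cdV _ _ _ _ tau0 lam0 cx dx tlt.
set G0 := fun s => (dV (x s) *m dyn g h (x s) (mu (x s))) ord0 ord0.
set D := fun s => - (dV (x s) *m h (x s) *m invmx Rm *m (h (x s))^T *m rho s) ord0 ord0.
have cG0 : {within [set s : R | 0 <= s], continuous G0} := cont_G0 g h mu dV x cg ch cmu cdV cx.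
have cD : {within [set s : R | 0 <= s], continuous D} := cont_D h Rm rho dV x ch crho cdV cx.
have cF : {within [set s : R | 0 <= s], continuous (V \o x)}.
  move/subspace_continuousP : cx => cx; apply/subspace_continuousP => s0 s0p.
  exact: (cvg_comp _ _ (cx s0 s0p) (differentiable_continuous (dVd (x s0)))).
have sub a b : 0 <= a -> `[a, b] `<=` [set s : R | 0 <= s].
  by move=> a0 s /=; rewrite in_itv /= => /andP[aS _]; exact: le_trans aS.
have key s : 0 < s -> s != tau -> s != tau + lam ->
    derivable (V \o x) s 1 /\ derive1 (V \o x) s =
    G0 s + (if (tau <= s) && (s <= tau + lam) then D s else 0).
  move=> s0 s1 s2; have [d e] := chain _ _ _ _ _ dVd DV (dx s s0 s1 s2); split => //.
  rewrite e /switched_control; case: ifP => _; last by rewrite addr0.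
  rewrite /mu_star /G0 /D /dyn !(mulmxDr, mulmxN) !mulmxA !mxE.
  ring.
have ca b a : 0 <= a -> {within `[a, b], continuous G0}.
  by move=> a0; exact: continuous_subspaceW (sub a b a0) cG0.
have cDa b a : 0 <= a -> {within `[a, b], continuous D}.
  by move=> a0; exact: continuous_subspaceW (sub a b a0) cD.
have cFa b a : 0 <= a -> {within `[a, b], continuous (V \o x)}.
  by move=> a0; exact: continuous_subspaceW (sub a b a0) cF.
have tl0 : 0 <= tau + lam by rewrite addr_ge0.
have tlam : tau <= tau + lam by rewrite lerDl.
have t0 : 0 <= t by exact: le_trans tlt.
have P1 : Rintegral lebesgue_measure `[0, tau] G0 = V (x tau) - V (x 0).
  apply: (ftc_piece (V \o x)) => //; [exact: ca | exact: cFa |].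
  move=> s; rewrite in_itv /= => /andP[s0 s1].
  have := key s s0 (negbT (lt_eqF s1)) (negbT (lt_eqF (lt_le_trans s1 tlam))).
  by rewrite leNgt s1 /= addr0.
have P2 : Rintegral lebesgue_measure `[tau, tau + lam] (fun s => G0 s + D s) =
    V (x (tau + lam)) - V (x tau).
  apply: (ftc_piece (V \o x) _ _ _ tlam); [ | exact: cFa |].
    move: (ca (tau + lam) tau tau0) (cDa (tau + lam) tau tau0).
    move=> /subspace_continuousP c1 /subspace_continuousP c2.
    by apply/subspace_continuousP => s0 s0in; apply: cvgD; [exact: c1 | exact: c2].
  move=> s; rewrite in_itv /= => /andP[s0 s1].
  have := key s (le_lt_trans tau0 s0) (negbT (gt_eqF s0)) (negbT (lt_eqF s1)).
  by rewrite (ltW s0) (ltW s1).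
have P3 : Rintegral lebesgue_measure `[tau + lam, t] G0 = V (x t) - V (x (tau + lam)).
  apply: (ftc_piece (V \o x)) => //; [exact: ca | exact: cFa |].
  move=> s; rewrite in_itv /= => /andP[s0 s1].
  have := key s (le_lt_trans tl0 s0) (negbT (gt_eqF (le_lt_trans tlam s0))) (negbT (gt_eqF s0)).
  by rewrite [s <= _]leNgt s0 andbF addr0.
have iG : lebesgue_measure.-integrable `[tau, tau + lam] (EFin \o G0).
  by apply: continuous_compact_integrable; [exact: segment_compact | exact: ca].
have iD : lebesgue_measure.-integrable `[tau, tau + lam] (EFin \o D).
  by apply: continuous_compact_integrable; [exact: segment_compact | exact: cDa].
rewrite RintegralD // in P2.
have E : V (x t) - V_nominal V dV g h mu x t =
    Rintegral lebesgue_measure `[tau, tau + lam] D.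
  rewrite /V_nominal -/G0.
  rewrite (@Rint_split _ G0 0 tau t) //; [| exact: le_trans tlt | exact: ca].
  rewrite (@Rint_split _ G0 tau (tau + lam) t) //; last exact: ca.
  rewrite P1 P3; lra.
rewrite E.
have [c cin cmax] := EVT_max tlam (cDa (tau + lam) tau tau0).
set B := beta dV h Rm rho x tau lam.
have ub s : [set` `[tau, tau + lam]] s -> D s <= B.
  move=> sin; apply: ub_le_sup; last by exists s.
  exists (D c) => y [s' s'in <-]; exact: cmax.
have iB : lebesgue_measure.-integrable `[tau, tau + lam] (EFin \o (fun=> B)).
  apply: continuous_compact_integrable; [exact: segment_compact |].
  by apply: continuous_subspaceT => ?; exact: cst_continuous.
apply: le_trans (le_Rintegral _ iD iB ub) _ => //.
rewrite Rintegral_cst //.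
have -> : fine (lebesgue_measure `[tau, tau + lam]) = lam.
  rewrite (@lebesgue_measure_itv R `[tau, tau + lam]) /= lte_fin.
  case: ifP => [_ /=|]; first lra.
  by move=> /negbT; rewrite -leNgt => l0 /=; lra.
by rewrite mulrC.
Qed.
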